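(* Let $p$ be an odd prime with $p\mid n$, $G=\mathrm{PGL}_n(\mathbb{C})$, and let $\bar A$ be a toral elementary abelian $p$-subgroup of $G$ with $C_G(\bar A)$ connected. Then $\bar A$ has a generating set (an $\mathbb{F}_p$-basis) none of whose elements is $G$-conjugate to $e_{n/p}$.
   Context: Toral: contained in a maximal torus. With $\alpha=e^{2\pi i/p}$ and $n=pk$, $e_{n/p}$ is the image in $G$ of $\mathrm{diag}(I_k,\alpha I_k,\dots,\alpha^{p-1}I_k)$. *)

(* Defs.v *)
From HB Require Import structures.
From mathcomp Require Import all_boot all_order all_algebra.
From mathcomp Require Import all_classical all_reals all_analysis.
From mathcomp Require Import complex.
Set Implicit Arguments. Unset Strict Implicit. Unset Printing Implicit Defensive.
Import Order.TTheory GRing.Theory Num.Theory.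
Import numFieldNormedType.Exports.
Local Open Scope ring_scope.
Local Open Scope classical_set_scope.

(* Elements of G = PGL_n(C) are represented by invertible matrices in
   'M[R[i]]_n, two matrices representing the same element of G iff they
   differ by a nonzero scalar.  A subgroup of G is represented by its full
   preimage in GL_n(C). *)

Section PGL.
Variables (R : realType) (n : nat).
Local Notation C := (R[i]).
Local Notation M := ('M[C]_n).

Definition pgl_eq (x y : M) : Prop := exists c : C, c != 0 /\ x = c *: y.

(* matrix powers and ordered products, valid for every n *)
Definition mxpow (x : M) (k : nat) : M := iter k (mulmx x) 1%:M.

Definition mxprod (r : nat) (b : 'I_r -> M) (k : 'I_r -> nat) : M :=
  \big[mulmx/1%:M]_(i < r) mxpow (b i) (k i).

Definition pgl_subgroup (A : set M) : Prop :=
  [/\ (forall a, A a -> a \in unitmx),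
      (forall c : C, c != 0 -> A (c%:M)),
      (forall a b, A a -> A b -> A (a *m b)) &
      (forall a, A a -> A (invmx a))].

Definition pgl_elem_abelian (p : nat) (A : set M) : Prop :=
  [/\ pgl_subgroup A,
      (exists s : seq M, forall a, A a -> exists2 b, b \in s & pgl_eq a b),
      (forall a b, A a -> A b -> pgl_eq (a *m b) (b *m a)) &
      (forall a, A a -> pgl_eq (mxpow a p) 1%:M)].

(* toral: contained in a maximal torus of PGL_n(C), i.e. conjugate into
   the image of the diagonal torus *)
Definition pgl_toral (A : set M) : Prop :=
  exists2 g : M, g \in unitmx &
    forall a, A a -> is_diag_mx (g *m a *m invmx g).

Definition pgl_centralizer (A : set M) : set M :=
  [set g | g \in unitmx /\ forall a, A a -> pgl_eq (g *m a *m invmx g) a].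

(* (path-)connectedness of a set of complex matrices, for the classical
   topology of C^(n*n) = R^(2*n*n) *)
Definition mx_path_connected (S : set M) : Prop :=
  forall x y, S x -> S y ->
    exists gam : R -> M,
      [/\ gam 0 = x, gam 1 = y,
          (forall t, 0 <= t <= 1 -> S (gam t)) &
          (forall i j, {within `[(0:R), 1], continuous (fun t : R => complex.Re (gam t i j))}
                    /\ {within `[(0:R), 1], continuous (fun t : R => complex.Im (gam t i j))})].

Definition pgl_conj (x y : M) : Prop :=
  exists2 g : M, g \in unitmx & pgl_eq (g *m x *m invmx g) y.

Definition pgl_Fp_basis (p : nat) (A : set M) (r : nat) (b : 'I_r -> M) : Prop :=
  [/\ (forall i, A (b i)),
      (forall a, A a -> exists k : 'I_r -> 'I_p, pgl_eq a (mxprod b (fun i => nat_of_ord (k i)))) &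
      (forall k : 'I_r -> 'I_p, pgl_eq (mxprod b (fun i => nat_of_ord (k i))) 1%:M ->
          forall i, nat_of_ord (k i) = 0%N)].
End PGL.

Definition alpha_root (R : realType) (p : nat) : R[i] :=
  (cos (2 * pi / p%:R) +i* sin (2 * pi / p%:R))%C.

(* e_{n/p}: diag(I_k, alpha I_k, ..., alpha^(p-1) I_k), k = n/p *)
Definition e_np (R : realType) (n p : nat) : 'M[R[i]]_n :=
  diag_mx (\row_(j < n) (alpha_root R p) ^+ (j %/ (n %/ p))).

(* Main.v *)
Require Import Defs.
From HB Require Import structures.
From mathcomp Require Import all_boot all_order all_algebra.
From mathcomp Require Import all_classical all_reals all_analysis.
From mathcomp Require Import complex.
From mathcomp Require Import ring lra.
Import Order.TTheory GRing.Theory Num.Theory.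
Import numFieldNormedType.Exports.
Local Open Scope ring_scope.
Local Open Scope classical_set_scope.
Section Alpha.
Variables (R : realType) (p : nat).
Hypotheses (pp : prime p) (op : odd p).
Local Notation al := (alpha_root R p).

Lemma cmulE (a b c d : R) : ((a +i* b) * (c +i* d) = (a * c - b * d) +i* (a * d + b * c))%C.
Proof. by []. Qed.

Lemma alpha_exp m : al ^+ m =
  (cos (m%:R * (2 * pi / p%:R)) +i* sin (m%:R * (2 * pi / p%:R)))%C.
Proof.
elim: m => [|m IH]; first by rewrite expr0 mul0r cos0 sin0.
rewrite exprS IH /alpha_root; set x := 2 * pi / p%:R.
rewrite cmulE -[m.+1]addn1 natrD mulrDl mul1r cosD sinD.
congr (_ +i* _)%C; ring.

Qed.

Lemma p_gt2 : (2 < p)%N.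
Proof.
have := prime_gt1 pp; rewrite leq_eqVlt => /orP[/eqP p2|//].
by move: op; rewrite -p2.
Qed.

Lemma alpha_p : al ^+ p = 1.
Proof.
have e : p%:R * (2 * pi / p%:R) = pi *+ 2 :> R.
  rewrite -mulr_natl; field.
  by rewrite pnatr_eq0 -lt0n prime_gt0.
by rewrite alpha_exp e cos2pi sin2pi.
Qed.

Lemma alpha_neq1 : al != 1.
Proof.
apply/negP => /eqP/(congr1 (@complex.Im R)) /=.
have : 0 < sin (2 * pi / p%:R :> R).
  apply: sin_gt0_pi; apply/andP; split.
    by rewrite divr_gt0 ?mulr_gt0 ?pi_gt0 // ltr0n prime_gt0.
  rewrite ltr_pdivrMr ?ltr0n ?prime_gt0 // mulrC ltr_pM2l ?pi_gt0 //.
  by rewrite (ltr_nat R 2) p_gt2.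
by move=> h e; move: h; rewrite e ltxx.
Qed.

Lemma alpha_prim : p.-primitive_root al.
Proof.
have [m pm mp] := prim_order_exists (prime_gt0 pp) alpha_p.
case: (m =P 1%N) => [m1|/eqP m1]; last by move: pm; rewrite (prime_nt_dvdP pp m1 mp).
move: pm; rewrite m1 => /prim_expr_order; rewrite expr1 => a1.
by move: alpha_neq1; rewrite a1 eqxx.
Qed.

Lemma sum_alpha : \sum_(i < p) al ^+ i = 0.
Proof.
have := subrX1 al p; rewrite alpha_p subrr => /esym/eqP.
by rewrite mulf_eq0 subr_eq0 (negbTE alpha_neq1) => /eqP.
Qed.

Lemma sum_blocks (x : R[i]) (k m : nat) : (0 < k)%N ->
  \sum_(0 <= j < m * k) x ^+ (j %/ k) = (\sum_(i < m) x ^+ i) *+ k.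
Proof.
move=> k0; elim: m => [|m IH]; first by rewrite mul0n big_geq // big_ord0 mul0rn.
rewrite (big_cat_nat (n := m * k)) //=; last by rewrite leq_mul2r leqnSn orbT.
rewrite IH big_ord_recr /= mulrnDl; congr (_ + _).
rewrite -{1}[(m * k)%N]add0n big_addn mulSn addnK.
rewrite (eq_big_nat _ _ (F2 := fun _ => x ^+ m)); first by rewrite sumr_const_nat subn0.
by move=> j /andP[_ jk]; rewrite /= divnDr ?dvdn_mull // mulnK // divn_small //.
Qed.

Lemma tr_enp n : (p %| n)%N -> \tr (e_np R n p) = 0.
Proof.
move=> pn; rewrite /e_np mxtrace_diag.
rewrite (eq_bigr (fun j : 'I_n => al ^+ (j %/ (n %/ p)))); last by move=> j _; rewrite mxE.
have [n0|n0] := posnP n; first by rewrite n0 big_ord0.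
have k0 : (0 < n %/ p)%N by rewrite divn_gt0 ?prime_gt0 // dvdn_leq.
rewrite -(big_mkord xpredT (fun j => al ^+ (j %/ (n %/ p)))).
by rewrite -{1}(divnK pn) mulnC sum_blocks // sum_alpha mul0rn.
Qed.
End Alpha.

Lemma greedy (K : fieldType) (vT : vectType K) (L : seq vT) :
  exists Z : seq vT, [/\ free Z, (<<Z>> = <<L>>)%VS & {subset Z <= L}].
Proof.
elim: L => [|x L [Z [fZ sZ subZ]]]; first by exists [::]; split => //; exact: nil_free.
case: (boolP (x \in <<Z>>%VS)) => xZ.
  exists Z; split => //; last by move=> y /subZ; rewrite inE orbC => ->.
  by rewrite span_cons -sZ; apply/esym/addv_idPr; rewrite -memvE.
exists (x :: Z); split.
- by rewrite free_cons xZ fZ.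
- by rewrite !span_cons sZ.
- by move=> y; rewrite !inE => /orP[->|/subZ ->]; rewrite ?orbT.
Qed.
Section Cont.
Variable R : realType.
Local Notation I01 := (`[(0:R), 1] : set R).
Definition wc (f : R -> R) := {within I01, continuous f}.
Lemma wc_cst c : wc (fun _ => c).
Proof. move=> x; exact: cst_continuous. Qed.
Lemma wc_D f g : wc f -> wc g -> wc (fun t => f t + g t).
Proof. move=> hf hg x; exact: (continuousD (hf x) (hg x)). Qed.
Lemma wc_B f g : wc f -> wc g -> wc (fun t => f t - g t).
Proof. move=> hf hg x; exact: (continuousB (hf x) (hg x)). Qed.
Lemma wc_N f : wc f -> wc (fun t => - f t).
Proof. move=> hf x; exact: (continuousN (hf x)). Qed.
Lemma wc_M f g : wc f -> wc g -> wc (fun t => f t * g t).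
Proof. move=> hf hg x; exact: (continuousM (hf x) (hg x)). Qed.
Lemma wc_sum (I : Type) (r : seq I) (P : pred I) (f : I -> R -> R) :
  (forall i, wc (f i)) -> wc (fun t => \sum_(i <- r | P i) f i t).
Proof.
move=> hf; elim: r => [|x r IH].
  by under eq_fun do rewrite big_nil; exact: wc_cst.
under eq_fun do rewrite big_cons.
case: (P x); last exact: IH.
exact: wc_D.
Qed.
Lemma wc_prod (I : Type) (r : seq I) (P : pred I) (f : I -> R -> R) :
  (forall i, wc (f i)) -> wc (fun t => \prod_(i <- r | P i) f i t).
Proof.
move=> hf; elim: r => [|x r IH].
  by under eq_fun do rewrite big_nil; exact: wc_cst.
under eq_fun do rewrite big_cons.
case: (P x); last exact: IH.
exact: wc_M.
Qed.
End Cont.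
Arguments wc {R}.
Arguments wc_cst {R}.
Arguments wc_D {R}.
Arguments wc_B {R}.
Arguments wc_M {R}.
Arguments wc_N {R}.
Arguments wc_sum {R}.
Arguments wc_prod {R}.


Section CCont.
Variable R : realType.
Local Notation C := (R[i]).
Definition cc (f : R -> C) := wc (fun t => complex.Re (f t)) /\ wc (fun t => complex.Im (f t)).

Lemma ReD (x y : C) : complex.Re (x + y) = complex.Re x + complex.Re y.
Proof. by case: x; case: y. Qed.
Lemma ImD (x y : C) : complex.Im (x + y) = complex.Im x + complex.Im y.
Proof. by case: x; case: y. Qed.
Lemma ReM (x y : C) : complex.Re (x * y) = complex.Re x * complex.Re y - complex.Im x * complex.Im y.
Proof. by case: x; case: y. Qed.
Lemma ImM (x y : C) : complex.Im (x * y) = complex.Re x * complex.Im y + complex.Im x * complex.Re y.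
Proof. by case: x => a b; case: y => c d /=; rewrite addrC. Qed.
Lemma ReN (x : C) : complex.Re (- x) = - complex.Re x.
Proof. by case: x. Qed.
Lemma ImN (x : C) : complex.Im (- x) = - complex.Im x.
Proof. by case: x. Qed.

Lemma cc_cst c : cc (fun _ => c).
Proof. by split; apply: wc_cst. Qed.
Lemma cc_D f g : cc f -> cc g -> cc (fun t => f t + g t).
Proof.
move=> [f1 f2] [g1 g2]; split.
  by under eq_fun do rewrite ReD; exact: wc_D.
by under eq_fun do rewrite ImD; exact: wc_D.
Qed.
Lemma cc_N f : cc f -> cc (fun t => - f t).
Proof.
move=> [f1 f2]; split.
  by under eq_fun do rewrite ReN; exact: wc_N.
by under eq_fun do rewrite ImN; exact: wc_N.
Qed.
Lemma cc_M f g : cc f -> cc g -> cc (fun t => f t * g t).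
Proof.
move=> [f1 f2] [g1 g2]; split.
  by under eq_fun do rewrite ReM; apply: wc_B; apply: wc_M.
by under eq_fun do rewrite ImM; apply: wc_D; apply: wc_M.
Qed.
Lemma cc_sum (I : Type) (r : seq I) (P : pred I) (f : I -> R -> C) :
  (forall i, cc (f i)) -> cc (fun t => \sum_(i <- r | P i) f i t).
Proof.
move=> hf; elim: r => [|x r IH].
  by under eq_fun do rewrite big_nil; exact: cc_cst.
under eq_fun do rewrite big_cons.
case: (P x); last exact: IH.
exact: cc_D.
Qed.
End CCont.
Arguments cc {R}.
Arguments cc_cst {R}.
Arguments cc_D {R}.
Arguments cc_N {R}.
Arguments cc_M {R}.
Arguments cc_sum {R}.


Section Main.
Variables (R : realType) (n p : nat) (A : set 'M[R[i]]_n).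
Hypotheses (pp : prime p) (op : odd p) (n0 : (0 < n)%N).
Hypothesis (hA : pgl_elem_abelian p A).
Variable g0 : 'M[R[i]]_n.
Hypotheses (g0u : g0 \in unitmx) (g0d : forall a, A a -> is_diag_mx (g0 *m a *m invmx g0)).

Local Notation C := (R[i]).
Local Notation M := ('M[C]_n).
Local Notation al := (alpha_root R p).

Lemma Au a : A a -> a \in unitmx. Proof. by case: hA => [[h _ _ _] _ _ _]; exact: h. Qed.
Lemma Asc (c : C) : c != 0 -> A c%:M. Proof. by case: hA => [[_ h _ _] _ _ _]; exact: h. Qed.
Lemma AM a b : A a -> A b -> A (a *m b). Proof. by case: hA => [[_ _ h _] _ _ _]; exact: h. Qed.
Lemma AV a : A a -> A (invmx a). Proof. by case: hA => [[_ _ _ h] _ _ _]; exact: h. Qed.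
Lemma A1 : A 1%:M. Proof. by apply: Asc; rewrite oner_eq0. Qed.
Lemma Apow a k : A a -> A (mxpow a k).
Proof. by move=> Aa; elim: k => [|k IH] /=; [exact: A1 | exact: AM]. Qed.
Lemma Aprod r (b : 'I_r -> M) (k : 'I_r -> nat) : (forall i, A (b i)) -> A (mxprod b k).
Proof.
elim: r b k => [|r IH] b k Ab; rewrite /mxprod; first by rewrite big_ord0; exact: A1.
rewrite big_ord_recl; apply: AM; first exact: Apow.
exact: (IH (fun i => b (lift ord0 i)) (fun i => k (lift ord0 i))).
Qed.

Definition D (a : M) : M := g0 *m a *m invmx g0.

Lemma DM a b : D (a *m b) = D a *m D b.
Proof. by rewrite /D !mulmxA mulmxKV. Qed.

Lemma D1 : D 1%:M = 1%:M.
Proof. by rewrite /D mulmx1 mulmxV. Qed.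

Lemma DZ (c : C) a : D (c *: a) = c *: D a.
Proof. by rewrite /D -scalemxAr -scalemxAl. Qed.

Lemma Dpow a k : D (mxpow a k) = mxpow (D a) k.
Proof. by elim: k => [|k IH] /=; rewrite ?D1 // DM IH. Qed.

Lemma Du a : A a -> D a \in unitmx.
Proof. by move=> Aa; rewrite /D !unitmx_mul g0u Au // unitmx_inv g0u. Qed.

Lemma diagE (X : M) : is_diag_mx X -> X = diag_mx (\row_i X i i).
Proof.
move=> /is_diag_mxP dX; apply/matrixP => i j; rewrite !mxE.
by case: (eqVneq i j) => [->|ne]; rewrite ?mulr1n // mulr0n dX.
Qed.

Definition dg a (j : 'I_n) : C := D a j j.

Lemma DE a : A a -> D a = diag_mx (\row_j dg a j).
Proof. by move=> Aa; apply: diagE; exact: g0d. Qed.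

Lemma dgM a b j : A a -> A b -> dg (a *m b) j = dg a j * dg b j.
Proof. by move=> Aa Ab; rewrite /dg DM (DE _ Aa) (DE _ Ab) mulmx_diag !mxE eqxx !mulr1n. Qed.

Lemma dg_neq0 a j : A a -> dg a j != 0.
Proof.
move=> Aa; have := Du _ Aa; rewrite unitmxE (DE _ Aa) det_diag unitfE.
rewrite (bigD1 j) //= mulf_eq0 negb_or mxE => /andP[] //.
Qed.

Lemma dgpow a k j : A a -> dg (mxpow a k) j = dg a j ^+ k.
Proof.
move=> Aa; elim: k => [|k IH]; first by rewrite /dg /= D1 mxE eqxx.
rewrite /= dgM ?IH ?exprS //; exact: Apow.
Qed.

Lemma dgZ (c : C) a j : dg (c *: a) j = c * dg a j.
Proof. by rewrite /dg DZ mxE. Qed.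

Definition i0 : 'I_n := Ordinal n0.
Definition rho a j := dg a j / dg a i0.

Lemma rho_p a j : A a -> rho a j ^+ p = 1.
Proof.
move=> Aa; case: hA => _ _ _ /(_ a Aa) [c [c0 e]].
have h k : dg a k ^+ p = c.
  by rewrite -dgpow // e dgZ /dg D1 mxE eqxx mulr1.
have c0' : c != 0 by rewrite -(h i0) expf_neq0 // dg_neq0.
by rewrite /rho exprMn exprVn !h divff.
Qed.

Lemma rhoM a b j : A a -> A b -> rho (a *m b) j = rho a j * rho b j.
Proof. by move=> Aa Ab; rewrite /rho !dgM // invfM mulrACA. Qed.



Let alP := alpha_prim R p pp op.
Let alp := alpha_p R p pp.

Definition expo (x : 'F_p) : C := al ^+ x.

Lemma Fp_lt (x : 'F_p) : (x < p)%N.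
Proof. by case: x => m hm /=; move: hm; rewrite Fp_cast. Qed.

Lemma alq : al ^+ (Zp_trunc (pdiv p)).+2 = 1.
Proof. by rewrite Fp_cast // alp. Qed.

Lemma expoD x y : expo (x + y) = expo x * expo y.
Proof. by rewrite /expo /= expr_mod ?alq // exprD. Qed.

Lemma expo0 : expo 0 = 1.
Proof. by rewrite /expo expr0. Qed.

Lemma expoN x : expo (- x) = (expo x)^-1.
Proof.
have h : expo x * expo (- x) = 1 by rewrite -expoD subrr expo0.
have nz : expo x != 0 by apply/negP => /eqP e; move: h; rewrite e mul0r => /eqP; rewrite eq_sym oner_eq0.
by rewrite -[expo (- x)]mul1r -(mulVf nz) -mulrA h mulr1.
Qed.

Lemma expo_nat k : expo (k%:R) = al ^+ k.
Proof. by rewrite /expo val_Fp_nat // prim_expr_mod // alP. Qed.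

Lemma expo_inj x y : expo x = expo y -> x = y.
Proof.
move/eqP; rewrite /expo (eq_prim_root_expr alP) !modn_small ?Fp_lt //.
by move=> /eqP e; apply: val_inj.
Qed.

Lemma expo_eq1 x : (expo x == 1) = (x == 0).
Proof.
apply/eqP/eqP => [e|->]; last exact: expo0.
by apply: expo_inj; rewrite e expo0.
Qed.

Lemma expo_surj (z : C) : z ^+ p = 1 -> exists x, expo x = z.
Proof.
move=> zp; have [i ->] := prim_rootP alP zp.
by exists (i%:R); rewrite expo_nat.
Qed.

Definition logp (z : C) : 'F_p := odflt 0 [pick x : 'F_p | expo x == z].

Lemma expo_log z : z ^+ p = 1 -> expo (logp z) = z.
Proof.
move=> zp; rewrite /logp; case: pickP => [x /eqP //|none].
by have [x ex] := expo_surj _ zp; move: (none x); rewrite ex eqxx.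
Qed.

Definition E (a : M) : 'rV['F_p]_n := \row_j logp (rho a j).

Lemma E_expo a j : A a -> expo (E a 0 j) = rho a j.
Proof. by move=> Aa; rewrite mxE expo_log // rho_p. Qed.

Lemma E_char a (v : 'rV['F_p]_n) : A a -> (forall j, expo (v 0 j) = rho a j) -> E a = v.
Proof.
move=> Aa h; apply/rowP => j; apply: expo_inj; by rewrite (E_expo _ _ Aa) h.
Qed.

Lemma E_mul a b : A a -> A b -> E (a *m b) = E a + E b.
Proof.
move=> Aa Ab; apply: E_char; first exact: AM.
by move=> j; rewrite mxE expoD (E_expo _ _ Aa) (E_expo _ _ Ab) (rhoM _ _ _ Aa Ab).
Qed.

Lemma E_1 : E 1%:M = 0.
Proof.
apply: E_char; first exact: A1.
move=> j; rewrite /rho /dg D1 [X in _ = X / _]mxE [X in _ = _ / X]mxE eqxx divr1.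
by rewrite mxE expo0.
Qed.

Lemma E_pow a k : A a -> E (mxpow a k) = E a *+ k.
Proof.
move=> Aa; elim: k => [|k IH] /=; first by rewrite E_1.
by rewrite (E_mul _ _ Aa (Apow _ k Aa)) IH mulrS.
Qed.

Lemma E_prod r (b : 'I_r -> M) (k : 'I_r -> nat) : (forall i, A (b i)) ->
  E (mxprod b k) = \sum_i E (b i) *+ k i.
Proof.
elim: r b k => [|r IH] b k Ab; rewrite /mxprod.
  by rewrite big_ord0 big_ord0 E_1.
rewrite big_ord_recl big_ord_recl.
have h1 := Apow _ (k ord0) (Ab ord0).
have h2 := Aprod _ (fun i => b (lift ord0 i)) (fun i => k (lift ord0 i)) (fun i => Ab (lift ord0 i)).
rewrite (E_mul _ _ h1 h2) E_pow //.
by rewrite (IH (fun i => b (lift ord0 i)) (fun i => k (lift ord0 i))).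
Qed.

Lemma E_pgl a b : A a -> A b -> pgl_eq a b <-> E a = E b.
Proof.
move=> Aa Ab; split.
  move=> [c [c0 e]]; apply: E_char => // j.
  by rewrite (E_expo _ _ Ab) /rho e !dgZ invfM mulrACA divff ?mul1r.
move=> e; exists (dg a i0 / dg b i0); split.
  by rewrite mulf_neq0 ?invr_eq0 ?dg_neq0.
have h : D a = (dg a i0 / dg b i0) *: D b.
  rewrite (DE _ Aa) (DE _ Ab); apply/matrixP => i j; rewrite !mxE.
  case: (_ == _); last by rewrite !mulr0n mulr0.
  rewrite !mulr1n; have h : rho a i = rho b i.
    by rewrite -(E_expo _ _ Aa) -(E_expo _ _ Ab) e.
  rewrite /rho in h.
  have bi0 := dg_neq0 _ i0 Ab; have ai0 := dg_neq0 _ i0 Aa.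
  by rewrite -(divfK ai0 (dg a i)) h [RHS]mulrC mulrAC mulrA.
have : invmx g0 *m D a *m g0 = invmx g0 *m ((dg a i0 / dg b i0) *: D b) *m g0 by rewrite h.
by rewrite -scalemxAr -scalemxAl /D !mulmxA (mulVmx g0u) mul1mx (mulmxKV g0u) mul1mx (mulmxKV g0u).
Qed.

Lemma tr_E a : A a -> \tr a = dg a i0 * \sum_j expo (E a 0 j).
Proof.
move=> Aa; have -> : \tr a = \tr (D a).
  by rewrite /D mxtrace_mulC mulmxA mulVmx // mul1mx.
rewrite (DE _ Aa) mxtrace_diag mulr_sumr; apply: eq_bigr => j _.
by rewrite (E_expo _ _ Aa) mxE /rho mulrC divfK // dg_neq0.
Qed.

Lemma scal_unit_eq0 (c : C) (Y : M) : Y \in unitmx -> c *: Y = 0 -> c = 0.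
Proof.
move=> Yu e; have := congr1 (fun X : M => (X *m invmx Y) i0 i0) e.
by rewrite /= -scalemxAl mulmxV // mul0mx !mxE eqxx mulr1n mulr1.
Qed.

Lemma mxpow_conj (u y : M) k : u \in unitmx ->
  mxpow (u *m y *m invmx u) k = u *m mxpow y k *m invmx u.
Proof.
move=> uu; elim: k => [|k IH] /=; first by rewrite mulmx1 mulmxV.
by rewrite IH !mulmxA mulmxKV.
Qed.

Lemma mxpowZ (c : C) (y : M) k : mxpow (c *: y) k = c ^+ k *: mxpow y k.
Proof.
elim: k => [|k IH] /=; first by rewrite expr0 scale1r.
by rewrite IH -scalemxAl -scalemxAr scalerA exprS.
Qed.

Lemma centr_root x a : pgl_centralizer A x -> A a ->
  exists m : 'I_p, x *m a = al ^+ m *: (a *m x).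
Proof.
move=> [xu hx] Aa; have [c [c0 e]] := hx a Aa.
have e2 : x *m a = c *: (a *m x) by rewrite scalemxAl -e mulmxKV.
have cp : c ^+ p = 1.
  case: hA => _ _ _ /(_ a Aa) [c' [c'0 e']].
  have := mxpow_conj x a p xu.
  rewrite e mxpowZ e' -scalemxAr -scalemxAl mulmx1 mulmxV // scalerA.
  move=> /(congr1 (fun X : M => X i0 i0)); rewrite !mxE eqxx mulr1n !mulr1 => h.
  by apply: (mulIf c'0); rewrite mul1r.
have [m em] := prim_rootP alP cp.
by exists m; rewrite -em.
Qed.

Hypothesis conn : mx_path_connected (pgl_centralizer A).

Lemma centr_comm h a : pgl_centralizer A h -> A a -> h *m a = a *m h.
Proof.
move=> hC Aa; apply/eqP/negPn/negP => hne.
have c1 : pgl_centralizer A 1%:M.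
  split; first exact: unitmx1.
  move=> b _; exists 1; split; first exact: oner_neq0.
  by rewrite mul1mx invmx1 mulmx1 scale1r.
have [gam [g0' g1' gC gcont]] := conn _ _ c1 hC.
pose X (m : nat) t := gam t *m a - al ^+ m *: (a *m gam t).
pose F (m : nat) t := \sum_i \sum_j ((complex.Re (X m t i j)) ^+ 2 + (complex.Im (X m t i j)) ^+ 2).
pose G t := \prod_(m < p.-1) F m.+1 t.
have F_ge0 m t : 0 <= F m t.
  by apply: sumr_ge0 => i _; apply: sumr_ge0 => j _; apply: addr_ge0; apply: sqr_ge0.
have FX m t : (F m t == 0) = (X m t == 0).
  apply/eqP/eqP => [h0|e].
    apply/matrixP => i j; rewrite [RHS]mxE.
    have := psumr_eq0P (fun i _ => sumr_ge0 _ (fun j _ => addr_ge0 (sqr_ge0 (complex.Re (X m t i j))) (sqr_ge0 (complex.Im (X m t i j))))) h0 (i := i) isT.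
    move=> /psumr_eq0P => /(_ (fun j _ => addr_ge0 (sqr_ge0 _) (sqr_ge0 _)) j isT) /eqP.
    rewrite paddr_eq0 ?sqr_ge0 // !sqrf_eq0 => /andP[/eqP r0 /eqP i0'].
    by move: r0 i0'; case: (X m t i j) => ? ? /= -> ->.
  rewrite /F big1 // => i _; rewrite big1 // => j _; by rewrite e mxE /= expr0n /= addr0.
have Fc m : wc (F m).
  apply: wc_sum => i; apply: wc_sum => j.
  have ccX : cc (fun t => X m t i j).
    rewrite /X; under eq_fun do rewrite !mxE.
    apply: cc_D.
      apply: cc_sum => k; apply: cc_M; last exact: cc_cst.
      exact: gcont.
    apply: cc_N; apply: cc_M; first exact: cc_cst.
    apply: cc_sum => k; apply: cc_M; first exact: cc_cst.
    exact: gcont.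
  case: ccX => c1' c2'.
  by apply: wc_D; under eq_fun do rewrite expr2; apply: wc_M.
have Gc : wc G by apply: wc_prod.
have PT t : 0 <= t <= 1 -> F 0 t * G t = 0.
  move=> t01; have gt := gC t t01.
  have [m em] := centr_root _ _ gt Aa.
  have Xm : X m t = 0 by rewrite /X em subrr.
  case: m em Xm => [[|m'] mp] /= em Xm.
    by move/eqP: Xm; rewrite -FX => /eqP ->; rewrite mul0r.
  have m'p : (m' < p.-1)%N by rewrite -ltnS prednK // prime_gt0.
  rewrite /G (bigD1 (Ordinal m'p)) //=.
  by move/eqP: Xm; rewrite -FX => /eqP ->; rewrite mul0r mulr0.
have QT t : 0 <= t <= 1 -> F 0 t = 0 -> G t = 0 -> False.
  move=> t01 /eqP; rewrite FX /X expr0 scale1r subr_eq0 => /eqP e0.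
  move=> /eqP /prodf_eq0 [m' _]; rewrite FX /X subr_eq0 e0 => /eqP e1.
  have gu : a *m gam t \in unitmx.
    by rewrite unitmx_mul Au //; case: (gC t t01).
  have := scal_unit_eq0 (al ^+ m'.+1 - 1) _ gu.
  rewrite scalerBl scale1r -e1 subrr => /(_ erefl) /eqP.
  rewrite subr_eq0 -(expr0 al) (eq_prim_root_expr alP) mod0n modn_small //.
  by have := ltn_ord m'; rewrite -ltnS prednK // prime_gt0.
have ler01' : (0 : R) <= 1 by [].
pose psi t := F 0 t - G t.
have mm : Num.min (psi 0) (psi 1) <= 0 <= Num.max (psi 0) (psi 1).
  have X00 : F 0 0 = 0 by apply/eqP; rewrite FX /X g0' mul1mx mulmx1 expr0 scale1r subrr.
  have G1 : G 1 = 0.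
    have := PT 1; rewrite ler01' lexx => /(_ isT) /eqP; rewrite mulf_eq0 => /orP[|/eqP //].
    by rewrite FX /X g1' expr0 scale1r subr_eq0 (negbTE hne).
  rewrite /psi X00 G1 sub0r subr0; apply/andP; split.
    by rewrite ge_min oppr_le0 ?prodr_ge0.
  by rewrite le_max F_ge0 orbT.
have [t t01 psit] := @IVT R psi 0 1 0 ler01' (wc_B _ _ (Fc 0) Gc) mm.
move: t01; rewrite in_itv /= => t01.
move/eqP: psit; rewrite subr_eq0 => /eqP eFG.
have := PT t t01; rewrite eFG => /eqP; rewrite mulf_eq0 orbb => /eqP G0.
by apply: (QT t t01) => //; rewrite eFG.
Qed.

Variable s : seq M.
Hypothesis hs : forall a, A a -> exists2 b, b \in s & pgl_eq a b.

Definition sA := [seq b <- s | `[< A b >]].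
Definition sT := [seq b <- sA | \tr b != 0].
Definition XA := map E sA.
Definition XT := map E sT.
Definition Vs := <<XA>>%VS.
Definition Ws := <<XT>>%VS.

Lemma sA_A b : b \in sA -> A b.
Proof. by rewrite mem_filter => /andP[/asboolP]. Qed.

Lemma sT_A b : b \in sT -> A b /\ \tr b != 0.
Proof. by rewrite mem_filter => /andP[t /sA_A]. Qed.

Lemma AZ (c : C) a : c != 0 -> A a -> A (c *: a).
Proof. by move=> c0 Aa; rewrite -mul_scalar_mx; apply: AM => //; exact: Asc. Qed.

Lemma EA a : A a -> exists b, [/\ b \in sA, A b, E a = E b & \tr a = 0 <-> \tr b = 0].
Proof.
move=> Aa; have [b bs [c [c0 e]]] := hs _ Aa.
have Ab : A b.
  have -> : b = c^-1 *: a by rewrite e scalerA mulVf // scale1r.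
  by apply: AZ => //; rewrite invr_eq0.
exists b; split.
- by rewrite mem_filter bs andbT; apply/asboolP.
- exact: Ab.
- by apply/(E_pgl _ _ Aa Ab); exists c.
- by rewrite e mxtraceZ; split => [/eqP|->]; rewrite ?mulr0 // mulf_eq0 (negbTE c0) => /eqP.
Qed.

Lemma EA_V a : A a -> E a \in Vs.
Proof.
move=> Aa; have [b [bs Ab -> _]] := EA _ Aa.
by apply: memv_span; apply: map_f.
Qed.

Lemma EA_W a : A a -> \tr a != 0 -> E a \in Ws.
Proof.
move=> Aa ta; have [b [bs Ab -> [_ tb]]] := EA _ Aa.
apply: memv_span; apply: map_f; rewrite mem_filter bs andbT.
by apply/negP => /eqP /tb /eqP; rewrite (negbTE ta).
Qed.

Lemma V_E v : v \in Vs -> exists a, A a /\ E a = v.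
Proof.
move=> vV; have := coord_span (X := in_tuple XA) vV.
set k := fun i => coord (in_tuple XA) i v => ev.
pose bb (i : 'I_(size XA)) := nth 0 sA i.
have Abb i : A (bb i).
  apply: sA_A; apply: mem_nth; by rewrite -(size_map E) ltn_ord.
exists (mxprod bb (fun i => nat_of_ord (k i))); split; first exact: Aprod.
rewrite E_prod // [RHS]ev; apply: eq_bigr => i _.
rewrite -scaler_nat natr_Zp /= (nth_map 0) //.
by rewrite -(size_map E) ltn_ord.
Qed.

Definition Ssum (v : 'rV['F_p]_n) := \sum_j expo (v 0 j).

Lemma Ssum_tr a : A a -> (Ssum (E a) != 0) = (\tr a != 0).
Proof. by move=> Aa; rewrite (tr_E _ Aa) mulf_eq0 negb_or dg_neq0. Qed.

Lemma SW v : v \in Vs -> Ssum v != 0 -> v \in Ws.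
Proof. by move=> /V_E [a [Aa <-]]; rewrite Ssum_tr // => /(EA_W _ Aa). Qed.

Definition Nv := #|[pred v : 'rV['F_p]_n | v \in Vs]|.

Lemma orth (phi : 'rV['F_p]_n -> 'F_p) :
  (forall u v, phi (u + v) = phi u + phi v) ->
  \sum_(v | v \in Vs) expo (phi v) =
    if [forall v, (v \in Vs) ==> (phi v == 0)] then Nv%:R else 0.
Proof.
move=> phiD; case: ifP => [/forallP h|/negbT].
  rewrite (eq_bigr (fun _ => 1)); last by move=> v vV; have := h v; rewrite vV => /eqP ->; exact: expo0.
  by rewrite sumr_const.
rewrite negb_forall => /existsP [v0]; rewrite negb_imply => /andP[v0V pv0].
set S := \sum_(v | v \in Vs) _.
have eS : S = expo (phi v0) * S.
  rewrite {1}/S (reindex_inj (addrI v0)) /= mulr_sumr.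
  rewrite (eq_bigl (fun v => v \in Vs)); last first.
    move=> v; apply/idP/idP => h; last exact: memvD.
    by have := memvB h v0V; rewrite addrC addKr.
  by apply: eq_bigr => v _; rewrite phiD expoD.
have : (1 - expo (phi v0)) * S = 0 by rewrite mulrBl mul1r -eS subrr.
move/eqP; rewrite mulf_eq0 subr_eq0 eq_sym expo_eq1 (negbTE pv0) /= => /eqP //.
Qed.

Definition Cset (lam : 'rV['F_p]_n -> 'F_p) (j : 'I_n) : {set 'I_n} :=
  [set j' | [forall v, (v \in Vs) ==> (v 0 j' == v 0 j + lam v)]].

Lemma count_eq (lam : 'rV['F_p]_n -> 'F_p) j :
  (forall u v, lam (u + v) = lam u + lam v) ->
  #|Cset lam j|%:R * Nv%:R = \sum_(v | v \in Vs) expo (- v 0 j - lam v) * Ssum v.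
Proof.
move=> lamD.
have h j' : \sum_(v | v \in Vs) expo (v 0 j' - v 0 j - lam v) =
    if j' \in Cset lam j then Nv%:R else 0.
  rewrite orth; last by move=> u v; rewrite !mxE lamD; ring.
  rewrite inE; congr (if _ then _ else _); apply: eq_forallb => v.
  by rewrite -addrA -opprD subr_eq0.
rewrite mulr_natl -sumr_const big_mkcond /=.
under eq_bigr do rewrite -h.
rewrite exchange_big /=; apply: eq_bigr => v vV.
rewrite /Ssum mulr_sumr; apply: eq_bigr => j' _.
by rewrite -expoD; congr expo; ring.
Qed.

Lemma expo_neq0 x : expo x != 0.
Proof.
apply/negP => /eqP h; have := expoD x (- x); rewrite subrr expo0 h mul0r.
by move/eqP; rewrite oner_eq0.
Qed.

Lemma card_eq (chi : 'rV['F_p]_n -> 'F_p) j :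
  (forall u v, chi (u + v) = chi u + chi v) ->
  (forall w, w \in Ws -> chi w = 0) ->
  #|Cset chi j| = #|Cset (fun _ => 0%R) j|.
Proof.
move=> chiD chiW.
have e : #|Cset chi j|%:R * Nv%:R = #|Cset (fun _ => 0%R) j|%:R * Nv%:R :> C.
  rewrite !count_eq //; last by move=> *; rewrite addr0.
  apply: eq_bigr => v vV; case: (eqVneq (Ssum v) 0) => [->|sv]; first by rewrite !mulr0.
  by rewrite chiW ?SW // subr0.
have N0 : Nv%:R != 0 :> C.
  rewrite pnatr_eq0 -lt0n; apply/card_gt0P; exists 0; by rewrite inE mem0v.
by move/(mulIf N0)/eqP: e; rewrite eqr_nat => /eqP.
Qed.

Lemma sigma_exists (chi : 'rV['F_p]_n -> 'F_p) :
  (forall u v, chi (u + v) = chi u + chi v) ->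
  (forall w, w \in Ws -> chi w = 0) ->
  exists sg : 'I_n -> 'I_n, injective sg /\ forall j, sg j \in Cset chi j.
Proof.
move=> chiD chiW.
pose sg j := nth j (enum (Cset chi j)) (index j (enum (Cset (fun _ => 0%R) j))).
have jCl j : j \in Cset (fun _ => 0%R) j.
  by rewrite inE; apply/forallP => v; rewrite addr0 eqxx implybT.
have sz j : size (enum (Cset (fun _ => 0%R) j)) = size (enum (Cset chi j)).
  by rewrite -!cardE card_eq.
have ilt j : (index j (enum (Cset (fun _ => 0%R) j)) < size (enum (Cset chi j)))%N.
  by rewrite -sz index_mem mem_enum.
have sgC j : sg j \in Cset chi j by rewrite -mem_enum; apply: mem_nth.
exists sg; split => // j1 j2 e.
have same v : v \in Vs -> v 0 j1 = v 0 j2.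
  move=> vV; have := sgC j1; have := sgC j2; rewrite e !inE.
  move=> /forallP/(_ v) h2 /forallP/(_ v) h1; move: h1 h2.
  by rewrite vV /= => /eqP -> /eqP; exact: addIr.
have eC lam : Cset lam j1 = Cset lam j2.
  apply/setP => y; rewrite !inE; apply: eq_forallb => v.
  by case vV : (v \in Vs) => //=; rewrite same.
have r1 := ilt j1; have r2 := ilt j2.
move: e r1; rewrite /sg !(eC chi) !(eC (fun _ => 0%R)) => e r1.
move: e; rewrite (set_nth_default j2 j1 r1) => /eqP; rewrite nth_uniq ?enum_uniq // => /eqP ei.
have j1C : j1 \in enum (Cset (fun _ => 0%R) j2) by rewrite mem_enum -(eC (fun _ => 0%R)).
have j2C : j2 \in enum (Cset (fun _ => 0%R) j2) by rewrite mem_enum.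
rewrite -(nth_index j1 j1C) ei (set_nth_default j2) ?nth_index //.
by rewrite index_mem.
Qed.

Lemma VW : (Vs <= Ws)%VS.
Proof.
apply/negPn/negP => nVW.
have [v0 v0V v0W] : exists2 v0, v0 \in Vs & v0 \notin Ws.
  have : ~~ all (fun x => x \in Ws) XA.
    by apply/negP => /allP h; move/negP: nVW; apply; apply/span_subvP => x /h.
  rewrite -has_predC => /hasP [x xX xW]; exists x => //.
  exact: memv_span.
pose pi1 := addv_pi1 Vs Ws.
have pi1W w : w \in Ws -> pi1 w = 0.
  move=> wW; have e := addv_pi1_pi2 (subvP (addvSr Vs Ws) _ wW).
  rewrite (addv_pi2_id _ wW) in e.
  by apply: (addIr w); rewrite add0r.
have pv0 : pi1 v0 != 0.
  apply/negP => /eqP h0; apply: (negP v0W).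
  have := addv_pi1_pi2 (subvP (addvSl Vs Ws) _ v0V).
  rewrite /pi1 in h0; rewrite h0 add0r => <-; exact: memv_pi2.
have [j0 hj0] : exists j0, pi1 v0 0 j0 != 0.
  apply/existsP; apply: contraR pv0 => /existsPn h; apply/eqP/rowP => j.
  by rewrite mxE; apply/eqP/negPn; exact: h.
pose chi v := pi1 v 0 j0.
have chiD u v : chi (u + v) = chi u + chi v by rewrite /chi linearD mxE.
have chiW w : w \in Ws -> chi w = 0 by move=> wW; rewrite /chi pi1W // mxE.
have [sg [sginj sgC]] := sigma_exists chi chiD chiW.
have [a [Aa Ea]] := V_E _ v0V.
have [P PE Pu] : exists2 P : M, (forall i j, P i j = (sg i == j)%:R) & P \in unitmx.
  exists (perm_mx (perm.perm sginj)); last exact: unitmx_perm.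
  by move=> i j; rewrite /perm_mx mxE perm.permE mxE.
have PD b : A b -> P *m D b = expo (chi (E b)) *: (D b *m P).
  move=> Ab; rewrite (DE _ Ab) mul_mx_diag mul_diag_mx; apply/matrixP => i j.
  rewrite !mxE PE; case: (eqVneq (sg i) j) => [<-|]; last by rewrite !mulr0 mul0r.
  rewrite !mulr1; have := sgC i; rewrite inE => /forallP/(_ (E b)); rewrite EA_V //= => /eqP e.
  have dgE k : dg b k = expo (E b 0 k) * dg b i0.
    by rewrite (E_expo _ _ Ab) /rho divfK // dg_neq0.
  by rewrite (dgE (sg i)) (dgE i) e expoD ?mul1r; ring.
pose g := invmx g0 *m P *m g0.
have gu : g \in unitmx by rewrite !unitmx_mul unitmx_inv g0u Pu.
have gb b : A b -> g *m b = expo (chi (E b)) *: (b *m g).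
  move=> Ab.
  have e1 : g *m b = invmx g0 *m (P *m D b) *m g0 by rewrite /g /D !mulmxA mulmxKV.
  have e2 : b *m g = invmx g0 *m (D b *m P) *m g0 by rewrite /g /D !mulmxA (mulVmx g0u) mul1mx.
  by rewrite e1 PD // e2 -scalemxAr -scalemxAl.
have gC : pgl_centralizer A g.
  split => // b Ab; exists (expo (chi (E b))); split; first exact: expo_neq0.
  by rewrite gb // -scalemxAl mulmxK.
have := centr_comm _ _ gC Aa; rewrite gb // => e.
have : (expo (chi (E a)) - 1) *: (a *m g) = 0 by rewrite scalerBl e scale1r subrr.
move/scal_unit_eq0; rewrite unitmx_mul Au // gu => /(_ isT) /eqP.
by rewrite subr_eq0 expo_eq1 Ea (negbTE hj0).
Qed.

Lemma main_basis : exists r (b : 'I_r -> M),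
  pgl_Fp_basis p A b /\ (forall i, \tr (b i) != 0).
Proof.
have [Z [fZ sZ subZ]] := greedy _ _ XT.
pose r := size Z.
pose b (i : 'I_r) := nth 0 sT (index (Z`_i) XT).
have ZT (i : 'I_r) : Z`_i \in XT by apply: subZ; apply: mem_nth.
have bi (i : 'I_r) : (index (Z`_i)%R XT < size sT)%N by rewrite -(size_map E) index_mem ZT.
have bT i : b i \in sT by apply: mem_nth.
have Eb i : E (b i) = Z`_i.
  by rewrite /b -(nth_map 0 0) // nth_index.
have Ab i : A (b i) by have [] := sT_A _ (bT i).
exists r, b; split; last by move=> i; have [] := sT_A _ (bT i).
split => //.
- move=> a Aa; have : E a \in <<Z>>%VS by rewrite sZ; apply: (subvP VW); exact: EA_V.
  move=> /(coord_span (X := in_tuple Z)) ea.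
  exists (fun i => Ordinal (Fp_lt (coord (in_tuple Z) i (E a)))).
  apply/E_pgl => //; first exact: Aprod.
  rewrite E_prod // {1}ea; apply: eq_bigr => i _ /=.
  by rewrite Eb -scaler_nat natr_Zp.
- move=> k /E_pgl; rewrite E_prod // E_1 => /(_ (Aprod _ _ _ Ab) A1) h i.
  have fZ' : free (in_tuple Z) by [].
  have := (freeP fZ') (fun i => (nat_of_ord (k i))%:R) _ i.
  move=> /(_ _)/eqP; rewrite -(dvdn_pcharf (pchar_Fp pp)) /dvdn modn_small ?ltn_ord.
    by move=> /(_ _) /eqP; apply; rewrite -[RHS]h; apply: eq_bigr => j _; rewrite Eb scaler_nat.
  by [].
Qed.
End Main.

Theorem theorem4p31 (R : realType) (n p : nat) (A : set 'M[R[i]]_n) :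
  prime p -> odd p -> (0 < n)%N -> (p %| n)%N ->
  pgl_elem_abelian p A -> pgl_toral A ->
  mx_path_connected (pgl_centralizer A) ->
  exists r : nat, exists b : 'I_r -> 'M[R[i]]_n,
    pgl_Fp_basis p A b /\ (forall i, ~ pgl_conj (b i) (e_np R n p)).
Proof.
move=> pp op n0 pn hA [g0 g0u g0d] conn.
have hA' := hA; case: hA' => _ [s hs] _ _.
have [r [b [bas btr]]] := @main_basis R n p A pp op n0 hA g0 g0u g0d conn s hs.
exists r, b; split => // i [g gu [c [c0 e]]].
have := congr1 mxtrace e; rewrite mxtraceZ (tr_enp R p pp op n pn) mulr0.
rewrite mxtrace_mulC mulmxA (mulVmx gu) mul1mx => /eqP.
by rewrite (negbTE (btr i)).
Qed.
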